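(* Let $\Sigma$ be the system $\dot{x}=f(x,u)$, $y=h(x,u)$ with supply rate $s$, and let $x^*,x^{**}\in\mathcal{X}$ be two ground states such that $\Sigma$ is reachable from and controllable to each of $x^*$ and $x^{**}$, and $\Sigma$ is cyclo-dissipative with respect to $x^*$ and with respect to $x^{**}$. Denote by $S^*_{ac},S^*_{rc}$ the functions $S_{ac},S_{rc}$ defined with ground state $x^*$, and by $S^{**}_{ac},S^{**}_{rc}$ those defined with ground state $x^{**}$. Then $$S^*_{ac}(x^{**})+S^{**}_{ac}(x^* )\le 0,\qquad S^*_{rc}(x^{**})+S^{**}_{rc}(x^* )\ge 0.$$
   Context: $\Sigma$: $\dot{x}=f(x,u)$, $x\in\mathcal{X}$, $u\in\mathbb{R}^m$, $y=h(x,u)\in\mathbb{R}^p$; supply rate $s:\mathbb{R}^m\times\mathbb{R}^p\to\mathbb{R}$, with integrals of $s$ along solutions well-defined. For a ground state $\bar x$: $S_{ac}(x)=\sup_{u,\,T\ge0\,\mid\,x(0)=x,\,x(T)=\bar x}-\int_0^T s(u(t),y(t))\,dt$ and $S_{rc}(x)=\inf_{u,\,T\ge0\,\mid\,x(-T)=\bar x,\,x(0)=x}\int_{-T}^0 s(u(t),y(t))\,dt$. $\Sigma$ is cyclo-dissipative with respect to $\bar x$ if $\int_0^T s(u(t),y(t))\,dt\ge 0$ for all $T\ge0$ and all inputs such that $x(T)=x(0)=\bar x$. Reachable from $\bar x$: every state reachable from $\bar x$ in finite time; controllable to $\bar x$: $\bar x$ reachable in finite time from every state. *)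

(* Defs.v *)
From HB Require Import structures.
From mathcomp Require Import all_boot all_order all_algebra.
From mathcomp Require Import all_classical all_reals all_analysis.
Set Implicit Arguments. Unset Strict Implicit. Unset Printing Implicit Defensive.
Import Order.TTheory GRing.Theory Num.Theory.
Import numFieldNormedType.Exports.
Local Open Scope classical_set_scope.
Local Open Scope ring_scope.

Section System.
Variables (R : realType) (n m p : nat).
Variables (Xs : set 'rV[R]_n) (f : 'rV[R]_n -> 'rV[R]_m -> 'rV[R]_n)
          (h : 'rV[R]_n -> 'rV[R]_m -> 'rV[R]_p) (s : 'rV[R]_m -> 'rV[R]_p -> R).

Let mu := (@lebesgue_measure R).

Definition supply (u : R -> 'rV[R]_m) (x : R -> 'rV[R]_n) (t : R) : R :=
  s (u t) (h (x t) (u t)).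

(* x is a (Caratheodory) solution of xdot = f(x,u) on [a,b], staying in X,
   along which the integral of the supply rate is well defined. *)
Definition solution (u : R -> 'rV[R]_m) (x : R -> 'rV[R]_n) (a b : R) : Prop :=
  a <= b /\
  (forall t, a <= t <= b -> Xs (x t)) /\
  (forall i : 'I_n,
     mu.-integrable `[a, b] (fun t => (f (x t) (u t) ord0 i)%:E) /\
     forall t, a <= t <= b ->
       x t ord0 i = x a ord0 i + \int[mu]_(r in `[a, t]) f (x r) (u r) ord0 i) /\
  mu.-integrable `[a, b] (fun t => (supply u x t)%:E).

Definition supply_int (u : R -> 'rV[R]_m) (x : R -> 'rV[R]_n) (a b : R) : R :=
  \int[mu]_(t in `[a, b]) supply u x t.

Definition S_ac (xb x0 : 'rV[R]_n) : \bar R :=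
  ereal_sup [set z : \bar R | exists (u : R -> 'rV[R]_m) (x : R -> 'rV[R]_n) (T : R),
     0 <= T /\ solution u x 0 T /\ x 0 = x0 /\ x T = xb /\
     z = (- supply_int u x 0 T)%:E].

Definition S_rc (xb x0 : 'rV[R]_n) : \bar R :=
  ereal_inf [set z : \bar R | exists (u : R -> 'rV[R]_m) (x : R -> 'rV[R]_n) (T : R),
     0 <= T /\ solution u x (- T) 0 /\ x (- T) = xb /\ x 0 = x0 /\
     z = (supply_int u x (- T) 0)%:E].

Definition reachable_from (xb : 'rV[R]_n) : Prop :=
  forall x1, Xs x1 -> exists (u : R -> 'rV[R]_m) (x : R -> 'rV[R]_n) (T : R),
     0 <= T /\ solution u x 0 T /\ x 0 = xb /\ x T = x1.

Definition controllable_to (xb : 'rV[R]_n) : Prop :=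
  forall x1, Xs x1 -> exists (u : R -> 'rV[R]_m) (x : R -> 'rV[R]_n) (T : R),
     0 <= T /\ solution u x 0 T /\ x 0 = x1 /\ x T = xb.

Definition cyclo_dissipative (xb : 'rV[R]_n) : Prop :=
  forall (u : R -> 'rV[R]_m) (x : R -> 'rV[R]_n) (T : R),
     0 <= T -> solution u x 0 T -> x 0 = xb -> x T = xb ->
     0 <= supply_int u x 0 T.

End System.

(* Main.v *)
Require Import Defs.
From HB Require Import structures.
From mathcomp Require Import all_boot all_order all_algebra.
From mathcomp Require Import all_classical all_reals all_analysis.
From mathcomp Require Import ring lra measurable_realfun.
Import Order.TTheory GRing.Theory Num.Theory.
Local Open Scope ring_scope.
Local Open Scope classical_set_scope.

Section S.
Variable R : realType.
Local Notation mu := (@lebesgue_measure R).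

Lemma mshift (c : R) : measurable_fun setT (fun x : R => x - c).
Proof. apply: measurable_realfun.measurable_funD => //; exact: measurable_cst. Qed.

Lemma shift_measure (c : R) A : measurable A ->
  pushforward mu ((fun x => x - c) : _ -> measurableTypeR R) A = mu A.
Proof.
move=> mA; apply/esym/lebesgue_measure_unique => //=; first exact: mshift.
move=> _ _ [[a b]] _ <-.
rewrite /pushforward (_ : _ @^-1` _ = `]a + c, b + c]); last first.
  apply/seteqP; split => x /=; rewrite !in_itv /= => /andP[h1 h2];
  apply/andP; split; lra.
rewrite !lebesgue_measure_itv /= !lte_fin ltrD2r.
case: ifP => // _; rewrite -EFinD; congr (_%:E); lra.
Qed.

Lemma mshift_pre (c : R) (D : set R) : measurable D ->
  measurable ((fun x => x - c) @^-1` D).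
Proof. by move=> mD; rewrite -[X in measurable X]setTI; exact: mshift. Qed.

Lemma shift_ge0 (c : R) (D : set R) (g : R -> \bar R) :
  measurable D -> measurable_fun D g -> (forall x, D x -> (0 <= g x)%E) ->
  (\int[mu]_(x in D) g x =
   \int[mu]_(x in (fun x => x - c)%R @^-1` D) g (x - c)%R)%E.
Proof.
move=> mD mg g0.
transitivity (\int[pushforward mu ((fun x => x - c)%R : _ -> measurableTypeR R)]_(x in D) g x)%E.
  apply: eq_measure_integral; first exact: mshift.
  move=> mf A mA _; exact/esym/(@shift_measure c A mA).
apply: ge0_integral_pushforward => //; first exact: mshift.
by move=> y /set_mem; exact: g0.
Qed.

Lemma shift_mfun (c : R) (D : set R) (g : R -> \bar R) :
  measurable D -> measurable_fun D g ->
  measurable_fun ((fun x => x - c) @^-1` D) (fun x => g (x - c)).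
Proof.
move=> mD mg.
apply: (measurable_comp mD _ mg); last exact: measurable_funS (mshift c).
by move=> _ [x Dx <-].
Qed.

Lemma shift_integral (c : R) (D : set R) (g : R -> \bar R) :
  measurable D -> measurable_fun D g ->
  (\int[mu]_(x in D) g x =
   \int[mu]_(x in (fun x => x - c)%R @^-1` D) g (x - c)%R)%E.
Proof.
move=> mD mg; rewrite integralE [RHS]integralE.
rewrite (@shift_ge0 c D _ mD (measurable_realfun.measurable_funepos mg)); last by move=> *; exact: funepos_ge0.
rewrite (@shift_ge0 c D _ mD (measurable_realfun.measurable_funeneg mg)); last by move=> *; exact: funeneg_ge0.
by rewrite [in RHS](funepos_comp g (fun x => x - c)) [in RHS](funeneg_comp g (fun x => x - c)).
Qed.

Lemma shift_integrable (c : R) (D : set R) (g : R -> \bar R) :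
  measurable D -> mu.-integrable D g ->
  mu.-integrable ((fun x => x - c) @^-1` D) (fun x => g (x - c)).
Proof.
move=> mD /integrableP[mg ig]; apply/integrableP; split; first exact: shift_mfun.
rewrite -(@shift_ge0 c D (fun x => `|g x|)%E mD) //.
exact: measurableT_comp.
Qed.

End S.
Section S2.
Variable R : realType.
Local Notation mu := (@lebesgue_measure R).

Lemma itv_split (a b c : R) : a <= b -> b <= c ->
  `[a, c] = `[a, b] `|` `]b, c].
Proof.
move=> ab bc; apply: itv_bndbnd_setU; rewrite bnd_simp //.
Qed.

Lemma itv_disj (a b c : R) : [disjoint `[a, b] & `]b, c]].
Proof.
apply/disj_setPS => x [] /=; rewrite !in_itv /= => /andP[_ h1] /andP[h2 _].
lra.
Qed.

Lemma integrable_cat (a b c : R) (F : R -> \bar R) : a <= b -> b <= c ->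
  mu.-integrable `[a, b] F -> mu.-integrable `[b, c] F ->
  mu.-integrable `[a, c] F.
Proof.
move=> ab bc i1 i2.
have i2' : mu.-integrable `]b, c] F.
  by apply: integrableS i2 => //; apply: subset_itv; rewrite bnd_simp.
move: (i1) (i2') => /integrableP[m1 f1] /integrableP[m2 f2].
rewrite (@itv_split a b c ab bc); apply/integrableP; split.
  by apply/measurable_funU => //.
rewrite ge0_integral_setU //; first exact: lte_add_pinfty.
- apply/measurable_funU => //; split; exact: measurableT_comp.
- exact: itv_disj.
Qed.

Lemma Rint_cat (a b c : R) (F1 F2 : R -> R) : a <= b -> b <= c ->
  mu.-integrable `[a, b] (EFin \o F1) -> mu.-integrable `[b, c] (EFin \o F2) ->
  let F := fun t => if t <= b then F1 t else F2 t in
  mu.-integrable `[a, c] (EFin \o F) /\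
  \int[mu]_(t in `[a, c]) F t = \int[mu]_(t in `[a, b]) F1 t + \int[mu]_(t in `[b, c]) F2 t.
Proof.
move=> ab bc i1 i2 F.
have i2' : mu.-integrable `]b, c] (EFin \o F2).
  by apply: integrableS i2 => //; apply: subset_itv; rewrite bnd_simp.
have j1 : mu.-integrable `[a, b] (EFin \o F).
  apply: eq_integrable i1 => // t; rewrite inE /= in_itv /= => /andP[_ tb].
  by rewrite /F tb.
have j2 : mu.-integrable `]b, c] (EFin \o F).
  apply: eq_integrable i2' => // t; rewrite inE /= in_itv /= => /andP[bt _].
  by rewrite /F leNgt bt.
have jj : mu.-integrable `[a, c] (EFin \o F).
  rewrite (@itv_split a b c ab bc); apply/integrableP; split.
    apply/measurable_funU => //; split.
      by case/integrableP: j1.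
    by case/integrableP: j2.
  move/integrableP: j1 => [m1 f1]; move/integrableP: j2 => [m2 f2].
  rewrite ge0_integral_setU //; first exact: lte_add_pinfty.
  - apply/measurable_funU => //; split; exact: measurableT_comp.
  - exact: itv_disj.
split => //.
rewrite (@itv_split a b c ab bc) Rintegral_setU //; last first.
  - exact: itv_disj.
  - by rewrite -(@itv_split a b c ab bc).
congr (_ + _).
  apply: eq_Rintegral => t; rewrite inE /= in_itv /= => /andP[_ tb].
  by rewrite /F tb.
rewrite -Rintegral_itv_obnd_cbnd //.
apply: eq_Rintegral => t; rewrite inE /= in_itv /= => /andP[bt _].
by rewrite /F leNgt bt.
Qed.

End S2.
Section SupInf.
Variable R : realType.
Local Open Scope ereal_scope.

Lemma sup_sum_le0 (A B : set (\bar R)) a0 b0 : A a0 -> B b0 ->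
  (forall a, A a -> exists r, a = r%:E) -> (forall b, B b -> exists r, b = r%:E) ->
  (forall a b, A a -> B b -> a + b <= 0) -> ereal_sup A + ereal_sup B <= 0.
Proof.
move=> Aa0 Bb0 fA fB H.
have hb : forall b, B b -> ereal_sup A <= - b.
  move=> b Bb; apply: ge_ereal_sup => a Aa.
  have := H a b Aa Bb.
  have [ra ->] := fA a Aa; have [rb ->] := fB b Bb.
  rewrite -EFinD -EFinN !lee_fin => ?; lra.
have fs : ereal_sup A \is a fin_num.
  rewrite fin_numElt; apply/andP; split.
    apply: (@lt_le_trans _ _ a0); last exact: ereal_sup_ubound.
    by have [r ->] := fA a0 Aa0; exact: ltNyr.
  apply: (@le_lt_trans _ _ (- b0)); first exact: hb.
  by have [r ->] := fB b0 Bb0; exact: ltry.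
rewrite -(fineK fs).
have hB : ereal_sup B <= (- fine (ereal_sup A))%:E.
  apply: ge_ereal_sup => b Bb.
  have := hb b Bb; rewrite -(fineK fs).
  have [rb ->] := fB b Bb.
  rewrite -EFinN !lee_fin => ?; lra.
apply: (@le_trans _ _ ((fine (ereal_sup A))%:E + (- fine (ereal_sup A))%:E)).
  exact: leeD2l.
by rewrite -EFinD subrr.
Qed.

Lemma inf_sum_ge0 (A B : set (\bar R)) a0 b0 : A a0 -> B b0 ->
  (forall a, A a -> exists r, a = r%:E) -> (forall b, B b -> exists r, b = r%:E) ->
  (forall a b, A a -> B b -> 0 <= a + b) -> 0 <= ereal_inf A + ereal_inf B.
Proof.
move=> Aa0 Bb0 fA fB H.
have hb : forall b, B b -> - b <= ereal_inf A.
  move=> b Bb; apply: le_ereal_inf_tmp => a Aa.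
  have := H a b Aa Bb.
  have [ra ->] := fA a Aa; have [rb ->] := fB b Bb.
  rewrite -EFinD -EFinN !lee_fin => ?; lra.
have fs : ereal_inf A \is a fin_num.
  rewrite fin_numElt; apply/andP; split.
    apply: (@lt_le_trans _ _ (- b0)); last exact: hb.
    by have [r ->] := fB b0 Bb0; exact: ltNyr.
  apply: (@le_lt_trans _ _ a0); first exact: ereal_inf_lbound.
  by have [r ->] := fA a0 Aa0; exact: ltry.
rewrite -(fineK fs).
have hB : (- fine (ereal_inf A))%:E <= ereal_inf B.
  apply: le_ereal_inf_tmp => b Bb.
  have := hb b Bb; rewrite -(fineK fs).
  have [rb ->] := fB b Bb.
  rewrite -EFinN !lee_fin => ?; lra.
apply: (@le_trans _ _ ((fine (ereal_inf A))%:E + (- fine (ereal_inf A))%:E)).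
  by rewrite -EFinD subrr.
exact: leeD2l.
Qed.
End SupInf.
Section Shift2.
Variable R : realType.
Local Notation mu := (@lebesgue_measure R).

Lemma itv_pre (c a b : R) : (fun x => x - c) @^-1` `[a, b] = `[a + c, b + c].
Proof.
apply/seteqP; split => x /=; rewrite !in_itv /= => /andP[h1 h2];
  apply/andP; split; lra.
Qed.

Lemma Rint_shift (c a b : R) (F : R -> R) : mu.-integrable `[a, b] (EFin \o F) ->
  mu.-integrable `[a + c, b + c] (EFin \o (fun t => F (t - c))) /\
  \int[mu]_(t in `[a + c, b + c]) F (t - c) = \int[mu]_(t in `[a, b]) F t.
Proof.
move=> iF; split.
  by rewrite -itv_pre; exact: (@shift_integrable R c `[a, b] (EFin \o F) (measurable_itv _) iF).
rewrite /Rintegral -itv_pre; congr fine; symmetry.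
case/integrableP: iF => mF _.
exact: (@shift_integral R c `[a, b] (EFin \o F) (measurable_itv _) mF).
Qed.
End Shift2.

Section Sys.
Variables (R : realType) (n m p : nat) (Xs : set 'rV[R]_n)
  (f : 'rV[R]_n -> 'rV[R]_m -> 'rV[R]_n) (h : 'rV[R]_n -> 'rV[R]_m -> 'rV[R]_p)
  (s : 'rV[R]_m -> 'rV[R]_p -> R).
Local Notation mu := (@lebesgue_measure R).
Local Notation sol := (solution Xs f h s).
Local Notation sint := (supply_int h s).

Lemma sol_shift u x (a b c : R) : sol u x a b ->
  sol (fun t => u (t - c)) (fun t => x (t - c)) (a + c) (b + c) /\
  sint (fun t => u (t - c)) (fun t => x (t - c)) (a + c) (b + c) = sint u x a b.
Proof.
move=> [ab [hX [hF hS]]].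
split; last exact: (@Rint_shift R c _ _ _ hS).2.
split; first by rewrite lerD2r.
split.
  move=> t /andP[h1 h2]; apply: hX; apply/andP; split; lra.
split; last exact: (@Rint_shift R c _ _ _ hS).1.
move=> i; have [iF eF] := hF i; split; first exact: (@Rint_shift R c _ _ _ iF).1.
move=> t /andP[h1 h2]; rewrite /= addrK.
rewrite (eF (t - c)); last by apply/andP; split; lra.
congr (_ + _).
have iF' : mu.-integrable `[a, t - c] (EFin \o (fun t => f (x t) (u t) ord0 i)).
  by apply: integrableS iF => //; apply: subset_itv; rewrite bnd_simp //; lra.
by have := (@Rint_shift R c _ _ _ iF').2; rewrite subrK => <-.
Qed.

Lemma sol_cat u1 x1 u2 x2 (a b c : R) : sol u1 x1 a b -> sol u2 x2 b c -> x1 b = x2 b ->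
  sol (fun t => if t <= b then u1 t else u2 t) (fun t => if t <= b then x1 t else x2 t) a c /\
  sint (fun t => if t <= b then u1 t else u2 t) (fun t => if t <= b then x1 t else x2 t) a c
  = sint u1 x1 a b + sint u2 x2 b c.
Proof.
move=> [ab [X1 [F1 S1]]] [bc [X2 [F2 S2]]] e.
set U := fun t => if t <= b then u1 t else u2 t.
set X := fun t => if t <= b then x1 t else x2 t.
have piece : forall (G : 'rV[R]_n -> 'rV[R]_m -> R) t,
    G (X t) (U t) = if t <= b then G (x1 t) (u1 t) else G (x2 t) (u2 t).
  by move=> G t; rewrite /X /U; case: ifP.
have SS := @Rint_cat R _ _ _ _ _ ab bc S1 S2.
split; last first.
  rewrite /supply_int -SS.2; apply: eq_Rintegral => t _.
  exact: (piece (fun x u => s u (h x u)) t).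
split; first exact: le_trans ab bc.
split.
  move=> t /andP[h1 h2]; rewrite /X; case: ifP => tb.
    by apply: X1; rewrite h1 tb.
  by apply: X2; rewrite h2 andbT; move/negbT: tb; rewrite -ltNge => /ltW.
split; last first.
  apply: eq_integrable SS.1 => // t _ /=.
  by rewrite /supply (piece (fun x u => s u (h x u)) t).
move=> i; have [iF1 eF1] := F1 i; have [iF2 eF2] := F2 i.
have C := @Rint_cat R _ _ _ _ _ ab bc iF1 iF2.
split.
  apply: eq_integrable C.1 => // t _ /=.
  by rewrite (piece (fun x u => f x u ord0 i) t).
move=> t /andP[h1 h2].
have Xa : X a = x1 a by rewrite /X ab.
rewrite Xa.
have -> : \int[mu]_(r in `[a, t]) f (X r) (U r) ord0 i =
          \int[mu]_(r in `[a, t]) (if r <= b then f (x1 r) (u1 r) ord0 i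
                                    else f (x2 r) (u2 r) ord0 i).
  by apply: eq_Rintegral => r _; exact: (piece (fun x u => f x u ord0 i) r).
case: (leP t b) => tb.
  rewrite /X tb (eF1 t); last by rewrite h1 tb.
  congr (_ + _); apply: eq_Rintegral => r; rewrite inE /= in_itv /= => /andP[_ rt].
  by rewrite (le_trans rt tb).
have iF2' : mu.-integrable `[b, t] (EFin \o (fun t => f (x2 t) (u2 t) ord0 i)).
  by apply: integrableS iF2 => //; apply: subset_itv; rewrite bnd_simp.
have C' := @Rint_cat R _ _ _ _ _ ab (ltW tb) iF1 iF2'.
rewrite C'.2 /X leNgt tb /= (eF2 t); last by rewrite h2 (ltW tb).
rewrite -e (eF1 b); last by rewrite ab lexx.
by rewrite addrA.
Qed.

Lemma cycle_ge0 u1 x1 u2 x2 (T1 T2 : R) (X Y : 'rV[R]_n) :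
  cyclo_dissipative Xs f h s X ->
  0 <= T1 -> sol u1 x1 0 T1 -> x1 0 = X -> x1 T1 = Y ->
  0 <= T2 -> sol u2 x2 0 T2 -> x2 0 = Y -> x2 T2 = X ->
  0 <= sint u1 x1 0 T1 + sint u2 x2 0 T2.
Proof.
move=> CD T1p s1 e10 e1T T2p s2 e20 e2T.
have [s2' e2'] := @sol_shift _ _ 0 T2 T1 s2.
rewrite add0r in s2' e2'.
have e12 : x1 T1 = x2 (T1 - T1) by rewrite subrr e20 e1T.
have [sc ec] := @sol_cat _ _ _ _ 0 T1 (T2 + T1) s1 s2' e12.
have Tp : 0 <= T2 + T1 by rewrite addr_ge0.
have X0 : (if (0:R) <= T1 then x1 0 else x2 (0 - T1)) = X by rewrite T1p.
have XT : (if T2 + T1 <= T1 then x1 (T2 + T1) else x2 (T2 + T1 - T1)) = X.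
  case: ifP => hT; last by rewrite addrK.
  have T20 : T2 = 0 by apply/eqP; rewrite eq_le T2p andbT -(lerD2r T1) add0r.
  by rewrite T20 add0r e1T -e20 -T20.
have := CD _ _ (T2 + T1) Tp sc X0 XT.
by rewrite ec e2'.
Qed.

Lemma sol_neg u x (T : R) : sol u x 0 T ->
  sol (fun t => u (t + T)) (fun t => x (t + T)) (- T) 0 /\
  sint (fun t => u (t + T)) (fun t => x (t + T)) (- T) 0 = sint u x 0 T /\
  x (- T + T) = x 0 /\ x (0 + T) = x T.
Proof.
move=> s1; have [s1' e1'] := @sol_shift _ _ 0 T (- T) s1.
rewrite add0r subrr in s1' e1'.
rewrite opprK in s1' e1'.
split => //; split => //; split; congr x; ring.
Qed.

Lemma sol_pos u x (T : R) : sol u x (- T) 0 ->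
  sol (fun t => u (t - T)) (fun t => x (t - T)) 0 T /\
  sint (fun t => u (t - T)) (fun t => x (t - T)) 0 T = sint u x (- T) 0 /\
  x (0 - T) = x (- T) /\ x (T - T) = x 0.
Proof.
move=> s1; have [s1' e1'] := @sol_shift _ _ (- T) 0 T s1.
rewrite add0r addNr in s1' e1'.
split => //; split => //; split; congr x; ring.
Qed.

End Sys.

Theorem proposition3 (R : realType) (n m p : nat) (Xs : set 'rV[R]_n)
  (f : 'rV[R]_n -> 'rV[R]_m -> 'rV[R]_n) (h : 'rV[R]_n -> 'rV[R]_m -> 'rV[R]_p)
  (s : 'rV[R]_m -> 'rV[R]_p -> R) (xs xss : 'rV[R]_n) :
  Xs xs -> Xs xss ->
  reachable_from Xs f h s xs -> controllable_to Xs f h s xs ->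
  reachable_from Xs f h s xss -> controllable_to Xs f h s xss ->
  cyclo_dissipative Xs f h s xs -> cyclo_dissipative Xs f h s xss ->
  (S_ac Xs f h s xs xss + S_ac Xs f h s xss xs <= 0)%E /\
  (S_rc Xs f h s xs xss + S_rc Xs f h s xss xs >= 0)%E.
Proof.
move=> Xxs Xxss Rs Cs Rss Css CDs CDss.
split.
- have [ua [xa [Ta [Tap [sa [ea0 eaT]]]]]] := Cs xss Xxss.
  have [ub [xb [Tb [Tbp [sb [eb0 ebT]]]]]] := Css xs Xxs.
  apply: (@sup_sum_le0 R _ _ (- supply_int h s ua xa 0 Ta)%:E (- supply_int h s ub xb 0 Tb)%:E).
  + by exists ua, xa, Ta.
  + by exists ub, xb, Tb.
  + by move=> _ [u [x [T [_ [_ [_ [_ ->]]]]]]]; eexists.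
  + by move=> _ [u [x [T [_ [_ [_ [_ ->]]]]]]]; eexists.
  move=> _ _ [u1 [x1 [T1 [T1p [s1 [e10 [e1T ->]]]]]]] [u2 [x2 [T2 [T2p [s2 [e20 [e2T ->]]]]]]].
  have := @cycle_ge0 R n m p Xs f h s _ _ _ _ T2 T1 xs xss CDs T2p s2 e20 e2T T1p s1 e10 e1T.
  rewrite -EFinD lee_fin => H; lra.
- have [ua [xa [Ta [Tap [sa [ea0 eaT]]]]]] := Rs xss Xxss.
  have [ub [xb [Tb [Tbp [sb [eb0 ebT]]]]]] := Rss xs Xxs.
  have [sa' [ea' [ea1 ea2]]] := @sol_neg R n m p Xs f h s _ _ Ta sa.
  have [sb' [eb' [eb1 eb2]]] := @sol_neg R n m p Xs f h s _ _ Tb sb.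
  apply: (@inf_sum_ge0 R _ _ (supply_int h s ua xa 0 Ta)%:E (supply_int h s ub xb 0 Tb)%:E).
  + exists (fun t => ua (t + Ta)), (fun t => xa (t + Ta)), Ta.
    by rewrite ea1 ea2 ea0 eaT ea'; do !split => //.
  + exists (fun t => ub (t + Tb)), (fun t => xb (t + Tb)), Tb.
    by rewrite eb1 eb2 eb0 ebT eb'; do !split => //.
  + by move=> _ [u [x [T [_ [_ [_ [_ ->]]]]]]]; eexists.
  + by move=> _ [u [x [T [_ [_ [_ [_ ->]]]]]]]; eexists.
  move=> _ _ [u1 [x1 [T1 [T1p [s1 [e10 [e1T ->]]]]]]] [u2 [x2 [T2 [T2p [s2 [e20 [e2T ->]]]]]]].
  have [p1 [q1 [r1 t1]]] := @sol_pos R n m p Xs f h s _ _ T1 s1.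
  have [p2 [q2 [r2 t2]]] := @sol_pos R n m p Xs f h s _ _ T2 s2.
  rewrite -e10 -r1 in CDs.
  have := @cycle_ge0 R n m p Xs f h s _ _ _ _ T1 T2 _ _ CDs T1p p1 erefl erefl T2p p2.
  rewrite -q1 -q2 -EFinD lee_fin; apply.
    by rewrite r2 e20 t1 e1T.
  by rewrite t2 e2T r1 e10.
Qed.
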